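(* Let $\epsilon\in(0,1)$ and $T\in\mathbb{N}$, and let $k\in\mathbb{N}$. Let $w\in\{0,1\}^T$ be a random variable satisfying the $\epsilon$-martingale condition. Then \[ \Pr[w \text{ violates } k\text{-CP}] \le \Pr[w\text{ violates } k\text{-slot-CP}] \le T\cdot\exp\bigl(-\Omega(\epsilon^3(1-O(\epsilon))k)\bigr). \]
   Context: Characteristic strings and forks. A characteristic string is $w=w_1\dots w_n\in\{0,1\}^n$; index $i$ is honest if $w_i=0$ and adversarial if $w_i=1$. A fork for $w$ is a rooted tree $F=(V,E)$ with edges directed away from the root $r$, together with a labeling $\ell:V\to\{0,\dots,n\}$, such that (F1) $\ell(r)=0$; (F2) labels strictly increase along every directed path; (F3) every honest index is the label of exactly one vertex; (F4) if $i<j$ are honest indices then the vertex labeled $i$ has strictly smaller depth than the vertex labeled $j$. Write $F\vdash w$. A vertex is honest if it is the root or its label is an honest index. A tine is a directed path starting at the root (not necessarily ending at a leaf); its length is its number of edges, $\ell(t)$ is the label of its last vertex, and the depth of a vertex is the length of the tine ending at it. A tine $t$ is viable if its length is at least the depth of every honest vertex $v$ with $\ell(v)\le\ell(t)$. For a tine $t$, the trimmed tine $t^{\lceil k}$ is the portion of $t$ consisting of vertices labeled in $\{0,\dots,\ell(t)-k\}$; for tines $t_1,t_2$, $t_1\preceq t_2$ means $t_1$ is a prefix of $t_2$. $k$-slot-CP: a fork $F\vdash w$ satisfies $k$-slot-CP if for all pairs $(t_1,t_2)$ of viable tines of $F$ with $\ell(t_1)\le\ell(t_2)$, $t_1^{\lceil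 k}\preceq t_2$; $w$ satisfies $k$-slot-CP if every fork for $w$ does, and otherwise $w$ violates $k$-slot-CP. $k$-CP is the analogous (traditional) property where instead of removing the vertices of the last $k$ slots, the last $k$ blocks (vertices) of $t_1$ are removed; a $k$-CP violation implies a $k$-slot-CP violation. A random variable $W=(W_1,\dots,W_n)\in\{0,1\}^n$ satisfies the $\epsilon$-martingale condition if for every $t$, $\Pr[W_t=1\mid W_1,\dots,W_{t-1}]\le(1-\epsilon)/2$ (for arbitrary conditioning values). *)

(* Defs.v *)
From HB Require Import structures.
From Stdlib Require Import Reals.
From mathcomp Require Import all_boot all_order all_algebra.
From mathcomp Require Import boolp Rstruct.

Set Implicit Arguments.
Unset Strict Implicit.
Unset Printing Implicit Defensive.

Import Order.TTheory GRing.Theory Num.Theory.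

(* Characteristic strings: w = w_1 ... w_n given as a seq bool,        *)
(* w_i = nth true w (i-1); true = 1 = adversarial, false = 0 = honest. *)

Definition honest_index (w : seq bool) (i : nat) : bool :=
  (0 < i <= size w) && ~~ nth true w i.-1.

Record ltree := LTree {
  vtx : finType;
  root : vtx;
  parent : vtx -> option vtx;
  label : vtx -> nat
}.

Section Tree.
Variable F : ltree.

Definition pstep (v : vtx F) : vtx F := odflt v (@parent F v).

Definition anc (u v : vtx F) : bool :=
  [exists n : 'I_#|vtx F|, iter n pstep v == u].

Definition depth (v : vtx F) : nat := #|[set u | anc u v]|.-1.

End Tree.

Definition is_fork (w : seq bool) (F : ltree) : Prop :=
  (forall v, @parent F v = None <-> v = root F) /\
  [/\ 
      @label F (root F) = 0%N,
      (forall v, @label F v <= size w)%N,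
      (forall u v, @parent F v = Some u -> (@label F u < @label F v)%N),
      (forall i, honest_index w i -> #|[set v | @label F v == i]| = 1%N) &
      (forall i j (vi vj : vtx F), honest_index w i -> honest_index w j ->
         (i < j)%N -> @label F vi = i -> @label F vj = j ->
         (depth vi < depth vj)%N)].

Definition honest_vertex (w : seq bool) (F : ltree) (v : vtx F) : bool :=
  (v == root F) || honest_index w (@label F v).

(* tines are identified with their terminal vertex *)
Definition viable (w : seq bool) (F : ltree) (t : vtx F) : Prop :=
  forall v, honest_vertex w v -> (@label F v <= @label F t)%N ->
    (depth v <= depth t)%N.

(* t1^{⌈k} ⪯ t2 : every vertex of t1 labelled in {0,...,ℓ(t1)-k} lies on t2
   (if ℓ(t1) < k the trimmed tine is empty, trivially a prefix). *)
Definition trim_slots_prefix (F : ltree) (k : nat) (t1 t2 : vtx F) : Prop :=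
  forall u, anc u t1 -> (@label F u + k <= @label F t1)%N -> anc u t2.

(* traditional k-CP: remove the last k blocks (vertices) of t1 *)
Definition trim_blocks_prefix (F : ltree) (k : nat) (t1 t2 : vtx F) : Prop :=
  forall u, anc u t1 -> (depth u + k <= depth t1)%N -> anc u t2.

Definition violates_slot_cp (k : nat) (w : seq bool) : Prop :=
  exists F : ltree, is_fork w F /\
    exists t1 t2 : vtx F, [/\ viable w t1, viable w t2,
      (@label F t1 <= @label F t2)%N & ~ trim_slots_prefix k t1 t2].

Definition violates_cp (k : nat) (w : seq bool) : Prop :=
  exists F : ltree, is_fork w F /\
    exists t1 t2 : vtx F, [/\ viable w t1, viable w t2,
      (@label F t1 <= @label F t2)%N & ~ trim_blocks_prefix k t1 t2].

Local Open Scope ring_scope.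

Definition is_distr (T : nat) (P : T.-tuple bool -> R) : Prop :=
  (forall x, 0 <= P x) /\ \sum_x P x = 1.

Definition Pr (T : nat) (P : T.-tuple bool -> R) (A : seq bool -> Prop) : R :=
  \sum_(x : T.-tuple bool | `[< A (tval x) >]) P x.

(* ε-martingale condition (0-indexed t): for every t < T and every value b
   of (W_1..W_t), Pr[W_{t+1} = 1 /\ prefix = b] <= (1-ε)/2 * Pr[prefix = b];
   i.e. Pr[W_{t+1}=1 | prefix = b] <= (1-ε)/2 whenever the conditioning
   event has positive probability. *)
Definition martingale_cond (eps : R) (T : nat) (P : T.-tuple bool -> R) : Prop :=
  forall (t : nat) (b : seq bool), (t < T)%N -> size b = t ->
    Pr P (fun x => take t x = b /\ nth false x t = true)
      <= (1 - eps) / 2 * Pr P (fun x => take t x = b).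

(* Main.v *)
Require Import Defs.
From Stdlib Require Import Reals.
From mathcomp Require Import all_boot all_order all_algebra.
From mathcomp Require Import boolp Rstruct.
From mathcomp Require Import zify ring lra.
Import Order.TTheory GRing.Theory Num.Theory.
Set Implicit Arguments.
Unset Strict Implicit.
Unset Printing Implicit Defensive.

Lemma iter_addn' (T : Type) (f : T -> T) n m x :
  iter (n + m) f x = iter n f (iter m f x).
Proof. by elim: n => //= n ->. Qed.

Section Tree.
Variable w : seq bool.
Variable F : ltree.
Hypothesis HF : is_fork w F.

Local Notation V := (vtx F).
Local Notation lab := (@label F).
Local Notation par := (@parent F).
Local Notation rt := (Defs.root F).
Local Notation ps := (@pstep F).

Lemma par_root : par rt = None.
Proof. by case: HF => H _; apply/H. Qed.

Lemma lab_root : lab rt = 0.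
Proof. by case: HF => _ []. Qed.

Lemma lab_par u v : par v = Some u -> lab u < lab v.
Proof. by case: HF => _ [] _ _ H _ _; apply: H. Qed.

Lemma lab_pstep v : v != rt -> lab (pstep v) < lab v.
Proof.
move=> Hv; rewrite /pstep; case E: (par v) => [u|] /=; first exact: lab_par.
case: HF => H _; move/H: E => E; by rewrite E eqxx in Hv.
Qed.

Lemma pstep_root : pstep rt = rt.
Proof. by rewrite /pstep par_root. Qed.

Lemma lab_pstep_le v : lab (pstep v) <= lab v.
Proof. case: (eqVneq v rt) => [->|H]; first by rewrite pstep_root. exact/ltnW/lab_pstep. Qed.

Lemma lab_iter n v : lab (iter n ps v) <= lab v.
Proof. elim: n => //= n IH; exact: leq_trans (lab_pstep_le _) IH. Qed.

Lemma lab_iter_lt n v : iter n ps v != v -> lab (iter n ps v) < lab v.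
Proof.
elim: n => [|n IH] /=; first by rewrite eqxx.
case: (eqVneq (iter n ps v) v) => [E|E] H.
  rewrite E in H *; apply: lab_pstep; apply: contraNneq H => ->; by rewrite pstep_root.
exact: leq_ltn_trans (lab_pstep_le _) (IH E).
Qed.

Lemma iter_root n : iter n ps rt = rt.
Proof. by elim: n => //= n ->; rewrite pstep_root. Qed.

Lemma iter_fixed_root n u : 0 < n -> iter n ps u = u -> u = rt.
Proof.
move=> Hn E; apply/eqP; apply/negPn/negP => Hu.
have H1 := lab_pstep Hu.
case: n Hn E => // n _; rewrite iterSr => E.
have := lab_iter n (pstep u); rewrite E => H2.
by move: (leq_ltn_trans H2 H1); rewrite ltnn.
Qed.

Lemma reach_root v : exists2 m, m < #|V| & iter m ps v = rt.
Proof.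
set s := [seq iter m ps v | m <- iota 0 #|V|.+1].
have: ~~ uniq s.
  apply/negP => /card_uniqP Hs.
  have := max_card (mem s); rewrite Hs size_map size_iota; by rewrite ltnn.
move/(uniqPn v) => [i [j [Hij Hj E]]].
rewrite size_map size_iota in Hj.
have Hi : i < #|V|.+1 by apply: ltn_trans Hij Hj.
rewrite !(nth_map 0) ?size_iota // !nth_iota //= !add0n in E.
exists i; first lia.
apply: (@iter_fixed_root (j - i)); first by rewrite subn_gt0.
by rewrite -iter_addn' subnK ?(ltnW Hij).
Qed.

Definition ancN (u v : V) := exists n, iter n ps v = u.

Lemma ancP u v : reflect (ancN u v) (anc u v).
Proof.
apply: (iffP existsP) => [[n /eqP <-]|[n E]]; first by exists n.
case: (ltnP n #|V|) => Hn; first by exists (Ordinal Hn); rewrite E.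
case: (reach_root v) => m Hm Em.
exists (Ordinal Hm) => /=.
have: iter n ps v = rt by rewrite -(subnK (ltnW (leq_trans Hm Hn))) iter_addn' Em iter_root.
by rewrite E => ->; rewrite Em.
Qed.

Lemma ancN_refl v : ancN v v.
Proof. by exists 0. Qed.

Lemma ancN_trans u v x : ancN u v -> ancN v x -> ancN u x.
Proof. move=> [a Ea] [b Eb]; exists (a + b); by rewrite iter_addn' Eb Ea. Qed.

Lemma ancN_cmp u v t : ancN u t -> ancN v t -> ancN u v \/ ancN v u.
Proof.
move=> [a Ea] [b Eb]; case: (leqP a b) => H.
  right; exists (b - a); by rewrite -Ea -iter_addn' subnK.
left; exists (a - b); by rewrite -Eb -iter_addn' subnK ?(ltnW H).
Qed.

Lemma ancN_lab u v : ancN u v -> lab u <= lab v.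
Proof. move=> [n <-]; exact: lab_iter. Qed.

Lemma ancN_lab_lt u v : ancN u v -> u != v -> lab u < lab v.
Proof. move=> [n <-]; exact: lab_iter_lt. Qed.

Lemma ancN_root v : ancN rt v.
Proof. case: (reach_root v) => m _ E; by exists m. Qed.

Lemma ancN_to_root u : ancN u rt -> u = rt.
Proof. by move=> [n <-]; rewrite iter_root. Qed.

Definition Aset (v : V) := [set u | anc u v].

Lemma in_Aset u v : (u \in Aset v) = anc u v.
Proof. by rewrite inE. Qed.

Lemma Aset_self v : v \in Aset v.
Proof. rewrite in_Aset; apply/ancP/ancN_refl. Qed.

Lemma depthE v : depth v = #|Aset v|.-1.
Proof. by []. Qed.

Lemma Aset_sub y t : ancN y t -> Aset y \subset Aset t.
Proof.
move=> H; apply/subsetP => u; rewrite !in_Aset => /ancP Hu; apply/ancP.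
exact: ancN_trans Hu H.
Qed.

Lemma depth_root : depth rt = 0.
Proof.
rewrite depthE; have ->: Aset rt = [set rt].
  apply/setP => u; rewrite in_Aset inE; apply/ancP/eqP => [/ancN_to_root //|->].
  exact: ancN_refl.
by rewrite cards1.
Qed.

Lemma depth_pos v : v != rt -> 0 < depth v.
Proof.
move=> Hv; rewrite depthE.
have: [set rt; v] \subset Aset v.
  apply/subsetP => u; rewrite !inE => /orP [] /eqP ->.
    apply/ancP/ancN_root.
  apply/ancP/ancN_refl.
move/subset_leq_card; rewrite cards2 eq_sym Hv; by case: #|Aset v| => [|[|]].
Qed.

Lemma lab_pos v : v != rt -> 0 < lab v.
Proof. move=> Hv; have := lab_pstep Hv; by case: (lab v). Qed.

Lemma count_lemma (Lp : pred nat) y t : ancN y t ->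
  (forall v, ancN v t -> ~ ancN v y -> Lp (lab v)) ->
  depth t - depth y <= count Lp (iota (lab y).+1 (lab t - lab y)).
Proof.
move=> Hyt HL.
have Hsub := Aset_sub Hyt.
have Hy : 0 < #|Aset y| by apply/card_gt0P; exists y; apply: Aset_self.
set B := Aset t :\: Aset y.
have HB : #|B| = #|Aset t| - #|Aset y| by rewrite cardsDS.
have -> : depth t - depth y = #|B| by rewrite HB !depthE; lia.
rewrite cardE -(size_map lab) -size_filter.
apply: uniq_leq_size.
  rewrite map_inj_in_uniq ?enum_uniq // => u v; rewrite !mem_enum !inE => /andP [Hu1 Hu2] /andP [Hv1 Hv2] E.
  apply/eqP; apply/negPn/negP => Huv.
  move/ancP: Hu2 => Hu2; move/ancP: Hv2 => Hv2.
  case: (ancN_cmp Hu2 Hv2) => H.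
    by move: (ancN_lab_lt H Huv); rewrite E ltnn.
  by rewrite eq_sym in Huv; move: (ancN_lab_lt H Huv); rewrite E ltnn.
move=> n /mapP [v]; rewrite mem_enum !inE => /andP [Hv1 Hv2] ->.
move/ancP: Hv2 => Hv2.
have Hny : ~ ancN v y by move/ancP => H; rewrite H in Hv1.
rewrite mem_filter HL // mem_iota /=.
have Hvy : y != v by apply/negP => /eqP E; apply: Hny; rewrite -E; apply: ancN_refl.
case: (ancN_cmp Hyt Hv2) => H; last by exfalso; apply: Hny.
have := ancN_lab_lt H Hvy; have := ancN_lab Hv2; have := ancN_lab Hyt; lia.
Qed.

Lemma uniq_honest i u v : honest_index w i -> lab u = i -> lab v = i -> u = v.
Proof.
case: HF => _ [] _ _ _ H3 _ Hi Eu Ev.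
move: (H3 i Hi) => /eqP /cards1P [x Ex].
have: u \in [set v | lab v == i] by rewrite inE Eu.
have: v \in [set v | lab v == i] by rewrite inE Ev.
by rewrite Ex !inE => /eqP -> /eqP ->.
Qed.

Lemma exists_honest i : honest_index w i -> exists v, lab v = i.
Proof.
case: HF => _ [] _ _ _ H3 _ Hi.
move: (H3 i Hi) => /eqP /cards1P [x Ex].
have: x \in [set v | lab v == i] by rewrite Ex inE.
by rewrite inE => /eqP <-; exists x.
Qed.

Lemma F4 i j (vi vj : V) : honest_index w i -> honest_index w j ->
  i < j -> lab vi = i -> lab vj = j -> depth vi < depth vj.
Proof. by case: HF => _ [] _ _ _ _ H4; apply: H4. Qed.

Lemma honest_nonroot v : honest_index w (lab v) -> v != rt.
Proof. apply: contraTneq => ->; by rewrite lab_root /honest_index. Qed.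

Lemma honest_viable (z : V) : honest_vertex w z -> viable w z.
Proof.
move=> Hz v Hv Hl.
case/orP: Hv => [/eqP ->|Hv]; first by rewrite depth_root.
case/orP: Hz => [/eqP Ez|Hz].
  by move: Hl; rewrite Ez lab_root leqn0 => /eqP E; rewrite E /honest_index in Hv.
move: Hl; rewrite leq_eqVlt => /orP [/eqP E|Hlt].
  by rewrite (uniq_honest Hz E erefl).
exact/ltnW/(F4 Hv Hz Hlt).
Qed.

Lemma chain (y : V) : honest_vertex w y -> forall n, exists z,
  [/\ honest_vertex w z, lab z <= lab y + n &
      depth y + count (honest_index w) (iota (lab y).+1 n) <= depth z].
Proof.
move=> Hy; elim => [|n [z [Hz Hlz Hdz]]].
  by exists y; rewrite addn0 /= addn0.
rewrite -addn1 iotaD count_cat /= addn0.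
case Hh: (honest_index w ((lab y).+1 + n)).
  case: (exists_honest Hh) => v Ev.
  exists v; split.
  - by rewrite /honest_vertex Ev Hh orbT.
  - by rewrite Ev; lia.
  have Hd : depth z < depth v.
    case/orP: Hz => [/eqP ->|Hz].
      rewrite depth_root; apply: depth_pos; apply: honest_nonroot; by rewrite Ev.
    apply: (F4 Hz Hh _ erefl Ev); lia.
  lia.
exists z; split => //; lia.
Qed.


Definition adv (n : nat) := (0 < n <= size w) && nth true w n.-1.

Lemma not_adv_honest n : 0 < n <= size w -> ~~ adv n -> honest_index w n.
Proof. by rewrite /adv /honest_index => ->. Qed.

Lemma honest_not_adv n : honest_index w n -> ~~ adv n.
Proof. by rewrite /adv /honest_index => /andP [-> ->]. Qed.

Lemma lab_le_size (v : V) : lab v <= size w.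
Proof. by case: HF => _ [] _ H _ _ _. Qed.

Lemma claimA (t y0 : V) h : viable w t -> honest_vertex w y0 -> ancN y0 t ->
  honest_index w h -> lab y0 < h -> h <= lab t ->
  (forall v, lab v = h -> ~ ancN v t) ->
  exists i' j, [/\ lab y0 <= i', i' < h, h <= j, j <= lab t &
    count (honest_index w) (iota i'.+1 (j - i')) <= count adv (iota i'.+1 (j - i'))].
Proof.
move=> Hvt Hy0 Hy0t Hh Hy0h Hht Hnot.
pose Py := [pred v | honest_vertex w v && anc v t && (lab v < h)].
have Py0 : Py y0 by rewrite /= Hy0 Hy0h andbT; apply/ancP.
case: (arg_maxnP lab Py0) => y /andP [/andP [Hy /ancP Hyt] Hyh] Hmax.
have Hy0y : lab y0 <= lab y := Hmax y0 Py0.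
have after : forall v, ancN v t -> ~ ancN v y -> lab y < lab v.
  move=> v Hv Hvy; case: (ancN_cmp Hyt Hv) => H; last by exfalso.
  apply: ancN_lab_lt H _; apply/negP => /eqP E; apply: Hvy; rewrite E; exact: ancN_refl.
have hon_gt : forall v, ancN v t -> ~ ancN v y -> ~~ adv (lab v) -> h < lab v.
  move=> v Hv Hvy Ha.
  have Hlv := after v Hv Hvy.
  have Hhv : honest_index w (lab v) by apply: not_adv_honest Ha; rewrite lab_le_size; lia.
  case: (ltngtP (lab v) h) => // E.
    have Pv : Py v by rewrite /= /honest_vertex Hhv orbT E andbT; apply/ancP.
    have := Hmax v Pv; lia.
  by exfalso; apply: (Hnot v E).
pose Pz := [pred z | honest_vertex w z && anc z t && (h < lab z)].
case: (boolP [exists z, Pz z]) => [/existsP [z0 Pz0]|Hnz].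
  case: (arg_minnP lab Pz0) => z /andP [/andP [Hz /ancP Hzt] Hhz] Hmin.
  have Hyz : ancN y z.
    case: (ancN_cmp Hyt Hzt) => // H; have := ancN_lab H; lia.
  have Hzr : z != rt by apply/negP => /eqP E; move: Hhz; rewrite E lab_root.
  have Hzh : honest_index w (lab z) by case/orP: Hz => // /eqP E; rewrite E eqxx in Hzr.
  have Hc := @count_lemma (fun n => adv n || (n == lab z)) y z Hyz.
  have Hc' : depth z - depth y <= count (fun n => adv n || (n == lab z)) (iota (lab y).+1 (lab z - lab y)).
    apply: Hc => v Hv Hvy.
    have Hvt0 : ancN v t := ancN_trans Hv Hzt.
    rewrite /=; case: (eqVneq (lab v) (lab z)) => [E|Hne]; first by rewrite orbT.
    rewrite orbF.

    case Ha: (adv (lab v)) => //=.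
    have Hhv := hon_gt v Hvt0 Hvy (negbT Ha).
    have Hhv' : honest_index w (lab v).
      apply: not_adv_honest (negbT Ha); have := after v Hvt0 Hvy; rewrite lab_le_size; lia.
    have Pv : Pz v by rewrite /= /honest_vertex Hhv' orbT Hhv andbT; apply/ancP.
    have := Hmin v Pv; have := ancN_lab Hv; lia.
  case: (chain Hy (lab z - lab y)) => z' [Hz' Hlz' Hdz'].
  have Hvz := honest_viable Hz Hz'.
  have Hlz'' : lab z' <= lab z by lia.
  move: (Hvz Hlz'') => Hdd.
  have Hlt : lab y < lab z by lia.
  have Esplit : lab z - lab y = (lab z - (lab y).+1) + 1 by lia.
  rewrite Esplit iotaD !count_cat /= in Hc' Hdz'.
  have EE : (lab y).+1 + (lab z - (lab y).+1) = lab z by lia.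
  rewrite EE in Hc' Hdz'.
  rewrite eqxx orbT Hzh /= in Hc' Hdz'.
  have Eq : count (fun n => adv n || (n == lab z)) (iota (lab y).+1 (lab z - (lab y).+1))
          = count adv (iota (lab y).+1 (lab z - (lab y).+1)).
    apply: eq_in_count => n; rewrite mem_iota => Hn.
    have : n != lab z by apply/negP => /eqP E; lia.
    by move/negbTE => ->; rewrite orbF.
  rewrite Eq in Hc'.
  exists (lab y), (lab z).-1; split; try lia.
    have := ancN_lab Hzt; lia.
  have -> : (lab z).-1 - lab y = lab z - (lab y).+1 by lia.
  lia.
have Hc : depth t - depth y <= count adv (iota (lab y).+1 (lab t - lab y)).
  apply: count_lemma Hyt _ => v Hv Hvy.
  apply/negPn/negP => Ha.
  have Hhv := hon_gt v Hv Hvy Ha.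
  have Hhv' : honest_index w (lab v).
    apply: not_adv_honest Ha; have := after v Hv Hvy; rewrite lab_le_size; lia.
  move/existsP: Hnz; apply; exists v.
  by rewrite /= /honest_vertex Hhv' orbT Hhv andbT; apply/ancP.
case: (chain Hy (lab t - lab y)) => z' [Hz' Hlz' Hdz'].
have Hlz'' : lab z' <= lab t by lia.
have Hdd := Hvt z' Hz' Hlz''.
exists (lab y), (lab t); split; lia.
Qed.


Lemma claimB k (t1 t2 u : V) : viable w t1 -> viable w t2 -> lab t1 <= lab t2 ->
  anc u t1 -> lab u + k <= lab t1 -> ~~ anc u t2 ->
  exists i, i + k < size w /\ forall h, i < h <= i + k -> exists i' j,
    [/\ i <= i', i' < h, h <= j, j <= size w &
      count (honest_index w) (iota i'.+1 (j - i')) <= count adv (iota i'.+1 (j - i'))].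
Proof.
move=> Hv1 Hv2 Hl12 /ancP Hu1 Hlu Hu2.
pose Px := [pred v | honest_vertex w v && anc v t1 && anc v t2].
have Pr : Px rt by rewrite /= /honest_vertex eqxx /=; apply/andP; split; apply/ancP/ancN_root.
case: (arg_maxnP lab Pr) => x /andP [/andP [Hx /ancP Hx1] /ancP Hx2] Hmax.
have Hxu : ancN x u.
  case: (ancN_cmp Hx1 Hu1) => // H; by move/negP: Hu2; case; apply/ancP; apply: ancN_trans H Hx2.
have Hxu' : x != u by apply/negP => /eqP E; move/negP: Hu2; apply; apply/ancP; rewrite -E.
have Hlxu := ancN_lab_lt Hxu Hxu'.
have Hlt1 := lab_le_size t1.
exists (lab x); split; first lia.
move=> h /andP [Hh1 Hh2].
case Ha: (adv h).
  exists h.-1, h; split; try lia.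
  have -> : h - h.-1 = 1 by lia.
  have -> : h.-1.+1 = h by lia.
  have Hnh : honest_index w h = false.
    by apply/negP => Hhh; move: (honest_not_adv Hhh); rewrite Ha.
  by rewrite /= Ha Hnh.
have Hh : honest_index w h by apply: not_adv_honest (negbT Ha); lia.
case: (exists_honest Hh) => v Ev.
have gen : forall t, viable w t -> ancN x t -> h <= lab t -> ~ ancN v t -> exists i' j,
    [/\ lab x <= i', i' < h, h <= j, j <= size w &
      count (honest_index w) (iota i'.+1 (j - i')) <= count adv (iota i'.+1 (j - i'))].
  move=> t Ht Hxt Hht Hvt.
  have Hnot : forall v', lab v' = h -> ~ ancN v' t.
    by move=> v' Ev'; rewrite (uniq_honest Hh Ev' Ev).
  case: (claimA Ht Hx Hxt Hh _ Hht Hnot) => [|i' [j [H1 H2 H3 H4 H5]]]; first lia.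
  exists i', j; split => //; have := lab_le_size t; lia.
case: (boolP (anc v t1)) => [/ancP Hvt1|/ancP Hvt1]; last by apply: gen Hv1 Hx1 _ Hvt1; lia.
case: (boolP (anc v t2)) => [/ancP Hvt2|/ancP Hvt2]; last by apply: gen Hv2 Hx2 _ Hvt2; lia.
have Pv : Px v by rewrite /= /honest_vertex Ev Hh orbT; apply/andP; split; apply/ancP.
have := Hmax v Pv; lia.
Qed.

Lemma slots_blocks k (t1 t2 : V) : trim_slots_prefix k t1 t2 -> trim_blocks_prefix k t1 t2.
Proof.
move=> H u Hu Hd; apply: H => //.
move/ancP: Hu => Hu.
have := @count_lemma predT u t1 Hu (fun _ _ _ => erefl).
rewrite count_predT size_iota; have := ancN_lab Hu; lia.
Qed.

End Tree.

Lemma viol_cp_slot k w : violates_cp k w -> violates_slot_cp k w.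
Proof.
move=> [F [HF [t1 [t2 [H1 H2 H3 H4]]]]].
exists F; split => //; exists t1, t2; split => //.
move=> H; apply: H4; exact: (@slots_blocks w F HF k t1 t2 H).
Qed.

Lemma viol_slot_event k w : violates_slot_cp k w ->
  exists i, i + k < size w /\ forall h, i < h <= i + k -> exists i' j,
    [/\ i <= i', i' < h, h <= j, j <= size w &
      count (honest_index w) (iota i'.+1 (j - i')) <= count (adv w) (iota i'.+1 (j - i'))].
Proof.
move=> [F [HF [t1 [t2 [H1 H2 H3 H4]]]]].
case: (boolP [exists u, anc u t1 && (label u + k <= label t1) && ~~ anc u t2]).
  move/existsP => [u /andP [/andP [Hu1 Hu2] Hu3]].
  exact: (@claimB w F HF k t1 t2 u H1 H2 H3 Hu1 Hu2 Hu3).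
move=> Hn; exfalso; apply: H4 => u Hu Hl.
case: (boolP (anc u t2)) => // Hu2; move/existsP: Hn; case; exists u; by rewrite Hu Hl Hu2.
Qed.


Definition Sw (w : seq bool) (t : nat) : int :=
  (count (adv w) (iota 1 t))%:Z - (count (honest_index w) (iota 1 t))%:Z.

Lemma Sw_diff w a b : a <= b ->
  (Sw w b - Sw w a = (count (adv w) (iota a.+1 (b - a)))%:Z
                     - (count (honest_index w) (iota a.+1 (b - a)))%:Z)%R.
Proof.
move=> Hab; have Eb : b = a + (b - a) by lia.
move: (b - a) Eb => d ->.
rewrite /Sw (iotaD 1 a d) !count_cat add1n.
rewrite !PoszD; lia.
Qed.

Lemma Sw_step w t : t < size w ->
  Sw w t.+1 = (Sw w t + (if nth false w t then 1 else -1))%R.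
Proof.
move=> Ht; rewrite /Sw -(addn1 t) (iotaD 1 t 1) !count_cat /= add1n.
rewrite /adv /honest_index /= (set_nth_default false) // Ht /=.
case: (nth false w t) => /=; rewrite !PoszD; lia.
Qed.

Definition Fev (k i : nat) (x : seq bool) : Prop :=
  forall h, i < h <= i + k -> exists i' j,
    [/\ i <= i', i' < h, h <= j, j <= size x & (Sw x i' <= Sw x j)%R].

Lemma viol_Fev k w : violates_slot_cp k w -> exists i, i + k < size w /\ Fev k i w.
Proof.
move=> /viol_slot_event [i [Hi H]]; exists i; split => // h Hh.
case: (H h Hh) => i' [j [H1 H2 H3 H4 H5]]; exists i', j; split => //.
have := Sw_diff w (ltnW (leq_trans H2 H3)).
move: H5; rewrite -lez_nat; lia.
Qed.

Inductive st := SNone of nat | SSome of nat & nat.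

Definition step (inwin : bool) (s : st) (c : bool) : st :=
  match s with
  | SNone g => if c then SNone g.+1 else
      (match g with g'.+1 => SNone g' | 0 => if inwin then SSome 0 0 else SNone 0 end)
  | SSome d D => if c then (match d with d'.+1 => SSome d' D | 0 => SNone D.+1 end)
                 else SSome d.+1 (maxn D d.+1)
  end.

Definition run (k : nat) (bits : seq bool) : nat * st :=
  foldl (fun p c => (p.1.+1, step (p.1 < k) p.2 c)) (0, SNone 0) bits.

Lemma run_fst k bits : (run k bits).1 = size bits.
Proof.
elim/last_ind: bits => // s c IH.
by rewrite /run foldl_rcons /= -/(run k s) IH size_rcons.
Qed.

Lemma run_rcons k s c : (run k (rcons s c)).2 = step (size s < k) (run k s).2 c.
Proof. by rewrite /run foldl_rcons /= -/(run k s) run_fst. Qed.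

Definition Inv (x : seq bool) (i k t : nat) (s : st) : Prop :=
  match s with
  | SNone g => forall m, i <= m <= t -> (Sw x t - Sw x m <= g%:Z)%R
  | SSome d D => exists h, i < h /\ h <= i + k /\ h <= t /\
       (forall m, i <= m < h -> (Sw x h < Sw x m)%R) /\
       (forall m, h <= m <= t -> (Sw x m <= Sw x h)%R) /\
       (Sw x h - Sw x t = d%:Z)%R /\
       (forall m, i <= m <= t -> (Sw x h - Sw x m <= D%:Z)%R)
  end.

Lemma inv_run x i k n : i + n <= size x ->
  Inv x i k (i + n) (run k (take n (drop i x))).2.
Proof.
elim: n => [|n IH] Hn.
  rewrite take0 addn0 /= => m Hm; have -> : m = i by lia.
  by rewrite subrr.
have Hlt : n < size (drop i x) by rewrite size_drop; lia.
rewrite (take_nth false Hlt) run_rcons size_take Hlt nth_drop.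
have IH' := IH ltac:(lia).
set t := i + n in IH' *.
have Ht : t < size x by rewrite /t; lia.
have ES := Sw_step Ht.
have -> : i + n.+1 = t.+1 by rewrite /t addnS.
move: IH'; case: (run k (take n (drop i x))).2 => [g|d D] /=.
- move=> Hg; case Hc: (nth false x t) ES => ES.
    move=> m Hm; case: (ltnP m t.+1) => Hm'.
      have := Hg m ltac:(lia); lia.
    have -> : m = t.+1 by lia.
    lia.
  case: g Hg => [|g] Hg.
    have B3 : forall m, i <= m <= t.+1 -> (Sw x t.+1 - Sw x m <= 0)%R.
      move=> m Hm; case: (ltnP m t.+1) => Hm'.
        have := Hg m ltac:(lia); lia.
      have -> : m = t.+1 by lia.
      lia.
    case: (ltnP n k) => Hnk /=; last exact: B3.
    have A1 : forall m, i <= m < t.+1 -> (Sw x t.+1 < Sw x m)%R.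
      by move=> m Hm; have := Hg m ltac:(lia); lia.
    have A2 : forall m, t.+1 <= m <= t.+1 -> (Sw x m <= Sw x t.+1)%R.
      by move=> m Hm; have -> : m = t.+1 by lia.
    exists t.+1; repeat split; (try lia); (try assumption).
  move=> m Hm; case: (ltnP m t.+1) => Hm'.
    have := Hg m ltac:(lia); lia.
  have -> : m = t.+1 by lia.
  lia.
- move=> [h [H1 [H2 [H3 [H4 [H5 [H6 H7]]]]]]].
  have H7t := H7 t ltac:(lia).
  case Hc: (nth false x t) ES => ES.
    case: d H6 H7t => [|d] H6 H7t /=.
      move=> m Hm; case: (ltnP m t.+1) => Hm'.
        have := H7 m ltac:(lia); lia.
      have -> : m = t.+1 by lia.
      lia.
    have A1 : forall m, h <= m <= t.+1 -> (Sw x m <= Sw x h)%R.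
      move=> m Hm; case: (ltnP m t.+1) => Hm'.
        by apply: H5; lia.
      have -> : m = t.+1 by lia.
      lia.
    have A2 : forall m, i <= m <= t.+1 -> (Sw x h - Sw x m <= D%:Z)%R.
      move=> m Hm; case: (ltnP m t.+1) => Hm'.
        by apply: H7; lia.
      have -> : m = t.+1 by lia.
      lia.
    exists h; repeat split; (try lia); (try assumption).
  have A1 : forall m, h <= m <= t.+1 -> (Sw x m <= Sw x h)%R.
    move=> m Hm; case: (ltnP m t.+1) => Hm'.
      by apply: H5; lia.
    have -> : m = t.+1 by lia.
    lia.
  have A2 : forall m, i <= m <= t.+1 -> (Sw x h - Sw x m <= (maxn D d.+1)%:Z)%R.
    move=> m Hm; case: (ltnP m t.+1) => Hm'.
      have := H7 m ltac:(lia); lia.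
    have -> : m = t.+1 by lia.
    lia.
  exists h; repeat split; (try lia); (try assumption).
Qed.

Lemma run_final_none x i k : i + k <= size x -> Fev k i x ->
  exists g, (run k (drop i x)).2 = SNone g.
Proof.
move=> Hik HF.
have Hi : i <= size x by lia.
have := @inv_run x i k (size x - i) ltac:(lia).
rewrite take_oversize ?size_drop // subnKC //.
case: (run k (drop i x)).2 => [g|d D]; first by exists g.
move=> [h [H1 [H2 [H3 [H4 [H5 [H6 H7]]]]]]].
case: (HF h ltac:(lia)) => i' [j [G1 G2 G3 G4 G5]].
have := H4 i' ltac:(lia); have := H5 j ltac:(lia); lia.
Qed.

Local Open Scope ring_scope.

Lemma leT (y x z : R) : x <= y -> y <= z -> x <= z.
Proof. exact: le_trans. Qed.

Section Pot.
Variables (eps : R) (k : nat).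
Hypotheses (He0 : 0 < eps) (He1 : eps < 1).

Definition qq := (1 - eps) / 2.
Definition gam := 1 + eps ^+ 2 / 4.
Definition nu := (1 + eps)^-1.
Definition kap := (1 - eps) / (1 + eps).
Definition tht := 1 - eps ^+ 3 / 8.

Lemma e1pos : 0 < 1 + eps. Proof. have h0 := He0; have h1 := He1. lra. Qed.
Lemma nuE : nu * (1 + eps) = 1.
Proof. have h0 := He0; have h1 := He1. rewrite /nu mulVf //; have := e1pos; lra. Qed.
Lemma nu_pos : 0 < nu. Proof. have h0 := He0; have h1 := He1. by rewrite /nu invr_gt0 e1pos. Qed.
Lemma q_ge0 : 0 <= qq. Proof. have h0 := He0; have h1 := He1. rewrite /qq; lra. Qed.
Lemma q_le1 : qq <= 1. Proof. have h0 := He0; have h1 := He1. rewrite /qq; lra. Qed.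
Lemma gam_ge1 : 1 <= gam. Proof. have h0 := He0; have h1 := He1. rewrite /gam; have := sqr_ge0 eps; rewrite expr2; nra. Qed.
Lemma tht_pos : 0 < tht.
Proof. have h0 := He0; have h1 := He1. rewrite /tht; have H : eps ^+ 3 < 1 by rewrite exprn_ilt1 //; lra. lra. Qed.
Lemma kap_ge0 : 0 <= kap.
Proof. have h0 := He0; have h1 := He1. rewrite /kap divr_ge0 //; have := e1pos; lra. Qed.
Lemma kap_le_nu : kap <= nu.
Proof. have h0 := He0; have h1 := He1. rewrite /kap /nu ler_pdivrMr ?e1pos // mulVf; have := e1pos; lra. Qed.

Lemma ineq_a : 1 <= tht * gam.
Proof. have h0 := He0; have h1 := He1.
rewrite /tht /gam.
have E2 : eps ^+ 3 = eps * eps ^+ 2 by rewrite exprS.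
have H2 : 0 < eps ^+ 2 by rewrite exprn_gt0.
have Hy1 : eps ^+ 2 < 1 by rewrite exprn_ilt1 //; lra.
have H8 : 0 < 8 - 4 * eps - eps * eps ^+ 2 by nra.
have := mulr_gt0 H2 H8.
rewrite E2; nra.
Qed.

Lemma ineq_b : (1 - qq) + qq * gam ^+ 2 <= tht * gam.
Proof. have h0 := He0; have h1 := He1.
rewrite /tht /gam /qq.
have E2 : eps ^+ 3 = eps * eps ^+ 2 by rewrite exprS.
have E4 : eps ^+ 2 * eps ^+ 2 = eps * eps ^+ 3 by rewrite -!exprD.
have H3 : 0 < eps ^+ 3 by rewrite exprn_gt0.
rewrite expr2; nra.
Qed.

Lemma ineq_c : nu * gam <= tht.
Proof. have h0 := He0; have h1 := He1.
rewrite mulrC /nu ler_pdivrMr ?e1pos // /tht /gam.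
have E2 : eps ^+ 3 = eps * eps ^+ 2 by rewrite exprS.
have H2 : 0 < eps ^+ 2 by rewrite exprn_gt0.
have H3 : 0 < eps ^+ 3 by rewrite exprn_gt0.
nra.
Qed.

Lemma ineq_d : (1 - qq) * (nu * gam) + qq * (1 + eps) <= tht.
Proof. have h0 := He0; have h1 := He1.
have -> : (1 - qq) * (nu * gam) = ((1 - qq) * gam) / (1 + eps) by rewrite /nu; field; have := e1pos; lra.
rewrite -lerBrDr ler_pdivrMr ?e1pos // /tht /gam /qq.
have E2 : eps ^+ 3 = eps * eps ^+ 2 by rewrite exprS.
have E4 : eps ^+ 2 * eps ^+ 2 = eps * eps ^+ 3 by rewrite -!exprD.
have H2 : 0 < eps ^+ 2 by rewrite exprn_gt0.
have H3 : 0 < eps ^+ 3 by rewrite exprn_gt0.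
nra.
Qed.

Lemma ineq_e : (1 - qq) * (nu * gam) + qq * gam <= tht.
Proof. have h0 := He0; have h1 := He1.
apply: le_trans ineq_d; rewrite lerD2l ler_wpM2l ?q_ge0 // /gam.
have H2 : eps ^+ 2 <= eps by rewrite expr2; nra.
lra.
Qed.

Lemma kap_id : (1 - qq) * kap ^+ 2 + qq = kap.
Proof. have h0 := He0; have h1 := He1. rewrite /kap /qq; field; have := e1pos; lra. Qed.


Lemma kap_le1 : kap <= 1.
Proof. have h0 := He0; have h1 := He1.
rewrite /kap ler_pdivrMr ?e1pos //; lra. Qed.

Definition fpot (s : st) : R :=
  match s with SNone g => gam ^+ g | SSome d D => nu ^+ d.+1 * gam ^+ (maxn D d).+1 end.
Definition ppot (s : st) : R :=
  match s with SNone _ => 1 | SSome d _ => kap ^+ d.+1 end.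
Definition Vn (n : nat) (s : st) : R :=
  if (n < k)%N then tht ^+ (k - n)%N * fpot s else ppot s.
Definition Phi (bits : seq bool) : R := Vn (size bits) (run k bits).2.

Lemma gam_ge0 : 0 <= gam. Proof. have := gam_ge1; lra. Qed.

Lemma fpot_ge0 s : 0 <= fpot s.
Proof.
case: s => [g|d D] /=; first exact: exprn_ge0 gam_ge0.
apply: mulr_ge0; apply: exprn_ge0; [exact: ltW nu_pos | exact: gam_ge0].
Qed.

Lemma ppot_ge0 s : 0 <= ppot s.
Proof. case: s => [g|d D] /=; [exact: ler01 | exact: exprn_ge0 kap_ge0]. Qed.

Lemma Vn_ge0 n s : 0 <= Vn n s.
Proof.
rewrite /Vn; case: ifP => _; last exact: ppot_ge0.
apply: mulr_ge0; [apply: exprn_ge0; exact: ltW tht_pos | exact: fpot_ge0].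
Qed.

Lemma ppot_le_fpot s : ppot s <= fpot s.
Proof.
case: s => [g|d D] /=; first exact: exprn_ege1 gam_ge1.
apply: (@le_trans _ _ (nu ^+ d.+1)).
  apply: lerXn2r; [rewrite nnegrE; exact: kap_ge0 | rewrite nnegrE; exact: ltW nu_pos | exact: kap_le_nu].
apply: ler_peMr; [apply: exprn_ge0; exact: ltW nu_pos | exact: exprn_ege1 gam_ge1].
Qed.

Lemma mix_help (fd fu f A B : R) : 0 <= f -> fd <= A * f -> fu <= B * f ->
  A <= tht -> (1 - qq) * A + qq * B <= tht ->
  fd <= tht * f /\ (1 - qq) * fd + qq * fu <= tht * f.
Proof.
move=> Hf Hd Hu HA HAB; have Hq0 := q_ge0; have Hq1 := q_le1.
split; first by apply: le_trans Hd _; apply: ler_wpM2r.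
apply: (@le_trans _ _ (((1 - qq) * A + qq * B) * f)); last exact: ler_wpM2r.
have X1 : 0 <= (1 - qq) * (A * f - fd) by apply: mulr_ge0; lra.
have X2 : 0 <= qq * (B * f - fu) by apply: mulr_ge0; lra.
move: X1 X2; move: qq => q; nra.
Qed.

Lemma fpot_step s : fpot (step true s false) <= tht * fpot s /\
  (1 - qq) * fpot (step true s false) + qq * fpot (step true s true) <= tht * fpot s.
Proof.
have Hq0 := q_ge0; have Hq1 := q_le1; have Hg0 := gam_ge0; have Hg1 := gam_ge1.
have Hn0 := nu_pos.
case: s => [[|g]|d D] /=.
- rewrite /= !expr1 expr0 !mulr1; split; [exact: ineq_c | exact: ineq_e].
- have Hgg : 0 <= gam ^+ g by exact: exprn_ge0.
  split.
    have E : tht * gam ^+ g.+1 = gam ^+ g * (tht * gam) by rewrite exprS; ring.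
    rewrite E -{1}(mulr1 (gam ^+ g)); apply: ler_wpM2l => //; exact: ineq_a.
  have -> : (1 - qq) * gam ^+ g + qq * gam ^+ g.+2 = gam ^+ g * ((1 - qq) + qq * gam ^+ 2).
    by rewrite !exprS expr0; ring.
  have E : tht * gam ^+ g.+1 = gam ^+ g * (tht * gam) by rewrite exprS; ring.
  rewrite E; apply: ler_wpM2l => //; exact: ineq_b.
- apply: (@mix_help _ _ _ (nu * gam) (1 + eps)); last 2 first.
  + exact: ineq_c.
  + exact: ineq_d.
  + exact: fpot_ge0 (SSome d D).
  + apply: (@le_trans _ _ (nu ^+ d.+2 * gam ^+ (maxn D d).+2)).
      apply: ler_wpM2l; first by apply: exprn_ge0; exact: ltW.
      apply: ler_weXn2l => //; lia.
    have E : nu ^+ d.+2 * gam ^+ (maxn D d).+2 = nu * gam * (nu ^+ d.+1 * gam ^+ (maxn D d).+1) by rewrite [nu ^+ d.+2]exprS [gam ^+ (maxn D d).+2]exprS; ring.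
    by rewrite E.
  + case: d => [|d] /=.
      rewrite maxn0 expr1 mulrA (mulrC (1 + eps)) nuE mul1r; exact: lexx.
    apply: (@le_trans _ _ (nu ^+ d.+1 * gam ^+ (maxn D d.+1).+1)).
      apply: ler_wpM2l; first by apply: exprn_ge0; exact: ltW.
      apply: ler_weXn2l => //; lia.
    rewrite [nu ^+ d.+2]exprS mulrA mulrA (mulrC (1 + eps)) nuE mul1r; exact: lexx.
Qed.

Lemma ppot_step s : ppot (step false s false) <= ppot s /\
  (1 - qq) * ppot (step false s false) + qq * ppot (step false s true) <= ppot s.
Proof.
have Hq0 := q_ge0; have Hq1 := q_le1; have Hk0 := kap_ge0; have Hk1 := kap_le1.
case: s => [[|g]|d D] /=; try (split; lra).
split.
  apply: ler_wiXn2l => //.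
case: d => [|d] /=.
  by rewrite mulr1 kap_id expr1.
have -> : (1 - qq) * kap ^+ d.+3 + qq * kap ^+ d.+1 = kap ^+ d.+1 * ((1 - qq) * kap ^+ 2 + qq).
  by rewrite !exprS expr0; ring.
by rewrite kap_id -exprSr.
Qed.

Lemma Vn_next n s c : (n < k)%N -> Vn n.+1 (step true s c) <= tht ^+ (k - n.+1)%N * fpot (step true s c).
Proof.
move=> Hn; rewrite /Vn; case: ifP => H; first exact: lexx.
have -> : (k - n.+1 = 0)%N by apply/eqP; rewrite subn_eq0; rewrite ltnNge in H; move/negbFE: H.
rewrite expr0 mul1r; exact: ppot_le_fpot.
Qed.

Lemma Phi_super bits : Phi (rcons bits false) <= Phi bits /\
  (1 - qq) * Phi (rcons bits false) + qq * Phi (rcons bits true) <= Phi bits.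
Proof.
have Hq0 := q_ge0; have Hq1 := q_le1.
rewrite /Phi !size_rcons !run_rcons.
move: (size bits) (run k bits).2 => n s.
case: (ltnP n k) => Hn.
  have [A1 A2] := fpot_step s.
  have E : Vn n s = tht ^+ (k - n.+1)%N * (tht * fpot s).
    by rewrite /Vn Hn mulrA -exprSr; congr (_ ^+ _ * _); lia.
  have Hc : 0 <= tht ^+ (k - n.+1)%N by apply: exprn_ge0; exact: ltW tht_pos.
  have B0 := Vn_next s false Hn; have B1 := Vn_next s true Hn.
  rewrite E; split.
    apply: le_trans B0 _; exact: ler_wpM2l.
  apply: (@le_trans _ _ (tht ^+ (k - n.+1)%N * ((1 - qq) * fpot (step true s false) + qq * fpot (step true s true)))); last exact: ler_wpM2l.
  rewrite mulrDr mulrCA [_ * (qq * _)]mulrCA; apply: lerD; apply: ler_wpM2l => //; lra.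
rewrite /Vn.
have -> : (n.+1 < k)%N = false by apply/negbTE; rewrite -leqNgt; exact: leq_trans Hn (leqnSn n).
have -> : (n < k)%N = false by apply/negbTE; rewrite -leqNgt.
exact: ppot_step.
Qed.

Lemma Phi_nil : Phi [::] = tht ^+ k.
Proof. by rewrite /Phi /= /Vn; case: k => //= k'; rewrite subn0 expr0 mulr1. Qed.

End Pot.

Local Open Scope ring_scope.

Lemma group (T t : nat) (Ht : (t <= T)%N) (G : seq bool -> T.-tuple bool -> R) :
  \sum_(x : T.-tuple bool) G (take t x) x =
  \sum_(b : t.-tuple bool) \sum_(x : T.-tuple bool | take t x == b) G b x.
Proof.
rewrite [RHS](eq_bigr (fun b : t.-tuple bool => \sum_(x : T.-tuple bool) (if take t x == b then G b x else 0)));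
  last by move=> b _; rewrite big_mkcond.
rewrite exchange_big /=; apply: eq_bigr => x _.
have Hs : size (take t x) == t by rewrite size_takel // size_tuple.
pose b0 := Tuple Hs.
rewrite (bigD1 b0) //= eqxx big1 ?addr0 // => b Hb.
case: ifP => // /eqP E; exfalso; move/negP: Hb; apply; apply/eqP/val_inj => /=.
by rewrite -E.
Qed.

Lemma mix_local (q p0 p1 p V0 V1 V : R) : 0 <= p0 -> 0 <= p1 -> p = p1 + p0 ->
  p1 <= q * p -> V0 <= V -> (1 - q) * V0 + q * V1 <= V -> p1 * V1 + p0 * V0 <= p * V.
Proof.
move=> H0 H1 Hp Hq HV0 HV.
have Hpp : 0 <= p by lra.
case: (leP V0 V1) => H.
  have X1 : 0 <= (q * p - p1) * (V1 - V0) by apply: mulr_ge0; lra.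
  have X2 : 0 <= p * (V - ((1 - q) * V0 + q * V1)) by apply: mulr_ge0; lra.
  rewrite Hp in X1 X2 *; nra.
have X1 : 0 <= p1 * (V0 - V1) by apply: mulr_ge0; lra.
have X2 : 0 <= p * (V - V0) by apply: mulr_ge0; lra.
rewrite Hp in X1 X2 *; nra.
Qed.

Lemma supermart (T : nat) (eps : R) (P : T.-tuple bool -> R) (V : seq bool -> R) :
  is_distr P -> martingale_cond eps P ->
  (forall b, V (rcons b false) <= V b /\
     (1 - qq eps) * V (rcons b false) + qq eps * V (rcons b true) <= V b) ->
  \sum_x P x * V x <= V [::].
Proof.
move=> [HP0 HP1] Hm HV.
suff H : forall t, (t <= T)%N -> \sum_x P x * V (take t x) <= V [::].
  have := H T (leqnn T).
  by rewrite (eq_bigr (fun x => P x * V x)) // => x _; rewrite take_oversize // size_tuple.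
elim => [|t IH] Ht.
  rewrite (eq_bigr (fun x => P x * V [::])); last by move=> x _; rewrite take0.
  by rewrite -mulr_suml HP1 mul1r.
apply: le_trans (IH (ltnW Ht)).
rewrite (eq_bigr (fun x => P x * V (rcons (take t x) (nth false x t)))); last first.
  by move=> x _; rewrite (take_nth false) // size_tuple.
rewrite (group (ltnW Ht) (fun b x => P x * V (rcons b (nth false x t)))).
rewrite (group (ltnW Ht) (fun b x => P x * V b)).
apply: ler_sum => b _.
rewrite (bigID (fun x : T.-tuple bool => nth false x t)) /=.
rewrite (eq_bigr (fun x => P x * V (rcons b true))); last by move=> x /andP [_ ->].
rewrite (eq_bigr (fun x => P x * V (rcons b false)) (P := fun x : T.-tuple bool => (take t x == b) && ~~ nth false x t));
  last by move=> x /andP [_ /negbTE ->].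
rewrite -!mulr_suml.
have [A1 A2] := HV b.
have Hb : size b = t by rewrite size_tuple.
have HM := Hm t b Ht Hb.
have E1 : Pr P (fun x => take t x = b /\ nth false x t = true) =
          \sum_(x : T.-tuple bool | (take t x == b) && nth false x t) P x.
  apply: eq_bigl => x; apply/asboolP/andP => [[-> ->]|[/eqP -> ->]] //.
have E2 : Pr P (fun x => take t x = b) = \sum_(x : T.-tuple bool | take t x == b) P x.
  by apply: eq_bigl => x; apply/asboolP/eqP.
rewrite E1 E2 in HM.
apply: (@mix_local (qq eps)) => //.
- by apply: sumr_ge0 => x _.
- by apply: sumr_ge0 => x _.
- by rewrite (bigID (fun x : T.-tuple bool => nth false x t)).
Qed.

Lemma Pr_le_pot T (P : T.-tuple bool -> R) (A : seq bool -> Prop) (V : seq bool -> R) :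
  (forall x, 0 <= P x) -> (forall x : T.-tuple bool, 0 <= V x) ->
  (forall x : T.-tuple bool, A x -> 1 <= V x) -> Pr P A <= \sum_x P x * V x.
Proof.
move=> HP HV HA; rewrite /Pr big_mkcond /=; apply: ler_sum => x _.
case: asboolP => H; first exact: ler_peMr (HP x) (HA x H).
exact: mulr_ge0.
Qed.

Lemma union_bound T (P : T.-tuple bool -> R) (A : seq bool -> Prop) (B : nat -> seq bool -> Prop) :
  (forall x, 0 <= P x) -> (forall x : T.-tuple bool, A x -> exists i, (i < T)%N /\ B i x) ->
  Pr P A <= \sum_(i < T) Pr P (B i).
Proof.
move=> HP HAB.
rewrite /Pr (eq_bigr (fun i : 'I_T => \sum_x (if `[< B i (tval x) >] then P x else 0)));
  last by move=> i _; rewrite big_mkcond.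
rewrite exchange_big /= big_mkcond /=; apply: ler_sum => x _.
case: asboolP => H; last by apply: sumr_ge0 => i _; by case: ifP.
case: (HAB x H) => i [Hi HB].
rewrite (bigD1 (Ordinal Hi)) //= asboolT //.
rewrite lerDl; apply: sumr_ge0 => j _; by case: ifP.
Qed.

Local Open Scope ring_scope.

Lemma exp_pow (y : R) n : exp y ^+ n = exp (GRing.mul y n%:R).
Proof.
elim: n => [|n IH]; first by rewrite expr0 mulr0 exp_0.
rewrite exprS IH -nat1r mulrDr mulr1.
by rewrite -RplusE exp_plus.
Qed.

Definition r3 (eps : R) := - (eps ^+ 3 / 8).

Lemma tht_exp (eps : R) : tht eps <= exp (r3 eps).
Proof.
have H := exp_ineq1_le (r3 eps); move/RleP: H => H.
rewrite RplusE R1E in H. have E : tht eps = 1 + r3 eps by []. by rewrite E.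
Qed.

Lemma V_cond (eps : R) k i (b : seq bool) : 0 < eps -> eps < 1 ->
  Phi eps k (drop i (rcons b false)) <= Phi eps k (drop i b) /\
  (1 - qq eps) * Phi eps k (drop i (rcons b false)) + qq eps * Phi eps k (drop i (rcons b true))
     <= Phi eps k (drop i b).
Proof.
move=> h0 h1; case: (leqP i (size b)) => H.
  rewrite !drop_rcons //; exact: Phi_super.
rewrite !drop_oversize ?size_rcons ?(ltnW H) //; split; [exact: lexx | lra].
Qed.

Theorem theorem2 :
  exists c1 c2 : R, 0 < c1 /\ 0 <= c2 /\
    forall (eps : R) (T k : nat) (P : T.-tuple bool -> R),
      0 < eps -> eps < 1 ->
      is_distr P -> martingale_cond eps P ->
      Pr P (violates_cp k) <= Pr P (violates_slot_cp k) /\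
      Pr P (violates_slot_cp k)
        <= T%:R * exp (- (c1 * eps ^+ 3 * (1 - c2 * eps) * k%:R)).
Proof.
exists (1 / 8), 0; split; first lra; split; first lra.
move=> eps T k P h0 h1 HP Hm.
have HP0 : forall x, 0 <= P x by case: HP.
split.
  rewrite /Pr big_mkcond [in X in _ <= X]big_mkcond /=; apply: ler_sum => x _.
  case: asboolP => H; first by rewrite asboolT //; exact: viol_cp_slot.
  by case: asboolP.
apply: (@le_trans _ _ (\sum_(i < T) Pr P (fun x => (i + k < size x)%N /\ Fev k i x))).
  apply: (@union_bound T P _ (fun (i : nat) x => (i + k < size x)%N /\ Fev k i x)) => // x /viol_Fev [i [Hi HF]]; exists i; split => //.
  rewrite size_tuple in Hi; lia.
apply: (@le_trans _ _ (\sum_(i < T) tht eps ^+ k)).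
  apply: ler_sum => i _.
  apply: (@le_trans _ _ (\sum_x P x * Phi eps k (drop i x))).
    apply: (@Pr_le_pot T P (fun x => (i + k < size x)%N /\ Fev k i x) (fun b => Phi eps k (drop i b))) => // [x|x [Hi HF]]; first exact: Vn_ge0.
    case: (run_final_none (ltnW Hi) HF) => g Eg.
    rewrite /Phi Eg /Vn size_drop.
    have -> : (size x - i < k)%N = false by apply/negbTE; lia.
    exact: lexx.
  rewrite -(Phi_nil eps k) -[Phi eps k [::]]/(Phi eps k (drop i [::])).
  apply: (@supermart T eps P (fun b => Phi eps k (drop i b)) HP Hm) => b.
  exact: V_cond h0 h1.
rewrite sumr_const card_ord -[in X in X <= _]mulr_natl.
apply: ler_wpM2l; first exact: ler0n.
apply: (@le_trans _ _ (exp (r3 eps) ^+ k)).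
  apply: lerXn2r; rewrite ?nnegrE.
  - exact: ltW (tht_pos h0 h1).
  - by apply/RleP/Rlt_le/exp_pos.
  - exact: tht_exp.
rewrite exp_pow !RmultE RminusE RoppE.
rewrite R1E mul0r oppr0 addr0 mulr1.
have -> : - (1 / 8 * eps ^+ 3 * k%:R) = r3 eps * k%:R by rewrite /r3; ring.
exact: lexx.
Qed.
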